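(* Let $\mathcal{P}$ and $\mathcal{S}$ be patterns, let $P\in\mathbb{R}^{n\times n}(\mathcal{P})$ be a reversible stochastic matrix with stationary distribution $\boldsymbol{\pi}$, and let $\hat{\boldsymbol{\pi}}=\boldsymbol{\pi}^{1/2}$ (entrywise square root). Let \[ \mathcal{F}=\{X\in\mathbb{R}^{n\times n}(\mathcal{S}\cup\mathcal{P}) : X_{ij}=P_{ij}\text{ for }\{i,j\}\in\mathcal{P}\setminus\mathcal{S},\ X\mathbf{1}=\mathbf{1},\ D_{\boldsymbol{\pi}}X=X^\top D_{\boldsymbol{\pi}},\ X\ge 0\}. \] Then $\mathcal{F}$ is convex, and the function \[ f(X)=\operatorname{tr}\!\left(\left(I-D_{\hat{\boldsymbol{\pi}}}XD_{\hat{\boldsymbol{\pi}}}^{-1}+\hat{\boldsymbol{\pi}}\hat{\boldsymbol{\pi}}^\top\right)^{-1}\right)+\frac12\|X-P\|_F^2 \] is convex over $\mathcal{F}$.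
   Context: A stochastic matrix is a nonnegative real matrix $P$ with $P\mathbf{1}=\mathbf{1}$ ($\mathbf{1}$ the all-ones vector); $X\ge0$ means entrywise. A stationary distribution of $P$ is a probability vector $\boldsymbol{\pi}$ with $\boldsymbol{\pi}^\top P=\boldsymbol{\pi}^\top$. A stochastic matrix is reversible if it is irreducible and its (unique, positive) stationary distribution satisfies $\pi_iP_{ij}=\pi_jP_{ji}$ for all $i,j$. $D_{\mathbf{v}}$ denotes the diagonal matrix with diagonal $\mathbf{v}$; $\|\cdot\|_F$ is the Frobenius norm. A pattern is a set of unordered pairs $\{i,j\}$, $1\le i,j\le n$, containing $\{i,i\}$ for all $i$; $\mathbb{R}^{n\times n}(\mathcal{S})$ is the set of real $n\times n$ matrices $\Delta$ with $\Delta_{ij}=\Delta_{ji}=0$ whenever $\{i,j\}\notin\mathcal{S}$. *)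

(* Defs.v *)
From HB Require Import structures.
From mathcomp Require Import all_boot all_order all_algebra.
Set Implicit Arguments. Unset Strict Implicit. Unset Printing Implicit Defensive.
Import Order.TTheory GRing.Theory Num.Theory.
Local Open Scope ring_scope.

Section Defs.
Variables (R : rcfType) (n : nat).

(* A pattern: a set of unordered pairs {i,j} containing all {i,i};
   represented as a reflexive symmetric relation on 'I_n. *)
Definition is_pattern (S : rel 'I_n) : Prop :=
  (forall i, S i i) /\ (forall i j, S i j = S j i).

Definition pattern_union (S T : rel 'I_n) : rel 'I_n :=
  fun i j => S i j || T i j.

Definition in_pattern (S : rel 'I_n) (D : 'M[R]_n) : Prop :=
  forall i j, ~~ S i j -> D i j = 0 /\ D j i = 0.

Definition ones : 'cV[R]_n := const_mx 1.

Definition nonneg_mx (X : 'M[R]_n) : Prop := forall i j, 0 <= X i j.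

Definition stochastic (P : 'M[R]_n) : Prop :=
  nonneg_mx P /\ P *m ones = ones.

Definition prob_vector (pi : 'cV[R]_n) : Prop :=
  (forall i, 0 <= pi i 0) /\ \sum_i pi i 0 = 1.

Definition stationary_distribution (P : 'M[R]_n) (pi : 'cV[R]_n) : Prop :=
  prob_vector pi /\ pi^T *m P = pi^T.

Definition irreducible (P : 'M[R]_n) : Prop :=
  forall i j, exists k : nat, 0 < (P ^+ k) i j.

Definition reversible (P : 'M[R]_n) : Prop :=
  stochastic P /\ irreducible P /\
  forall pi, stationary_distribution P pi ->
    forall i j, pi i 0 * P i j = pi j 0 * P j i.

Definition Dv (v : 'cV[R]_n) : 'M[R]_n := diag_mx v^T.

Definition frob2 (A : 'M[R]_n) : R := \sum_i \sum_j (A i j) ^+ 2.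

Definition feasible (Pp Ss : rel 'I_n) (P : 'M[R]_n) (pi : 'cV[R]_n)
  (X : 'M[R]_n) : Prop :=
  [/\ in_pattern (pattern_union Ss Pp) X,
      (forall i j, Pp i j -> ~~ Ss i j -> X i j = P i j),
      X *m ones = ones,
      Dv pi *m X = X^T *m Dv pi &
      nonneg_mx X].

Definition sqrt_vec (pi : 'cV[R]_n) : 'cV[R]_n := map_mx Num.sqrt pi.

Definition Mmat (pi : 'cV[R]_n) (X : 'M[R]_n) : 'M[R]_n :=
  1%:M - Dv (sqrt_vec pi) *m X *m invmx (Dv (sqrt_vec pi))
       + sqrt_vec pi *m (sqrt_vec pi)^T.

Definition fobj (P : 'M[R]_n) (pi : 'cV[R]_n) (X : 'M[R]_n) : R :=
  \tr (invmx (Mmat pi X)) + 2^-1 * frob2 (X - P).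

End Defs.

(* Main.v *)
Require Import Defs.
From HB Require Import structures.
From mathcomp Require Import all_boot all_order all_algebra.
From mathcomp Require Import ring lra.
Import Order.TTheory GRing.Theory Num.Theory.
Local Open Scope ring_scope.

Section Gen.
Variables (R : rcfType) (n : nat).

Definition qf (A : 'M[R]_n) (x y : 'rV[R]_n) : R := (x *m A *m y^T) 0 0.

Lemma tr11 (M : 'M[R]_1) : M^T 0 0 = M 0 0.
Proof. rewrite [LHS]mxE. done. Qed.

Lemma qf_sym (A : 'M[R]_n) x y : A^T = A -> qf A x y = qf A y x.
Proof.
move=> hA; rewrite /qf -tr11 !trmx_mul trmxK hA mulmxA //.
Qed.

Lemma qf_expand (A : 'M[R]_n) x y :
  qf A x y = \sum_i \sum_j x 0 i * A i j * y 0 j.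
Proof.
rewrite /qf mxE exchange_big /=; apply: eq_bigr => j _.
by rewrite !mxE big_distrl.
Qed.

Lemma qf_key (A : 'M[R]_n) x y : A^T = A -> A \in unitmx ->
  (forall z, 0 <= qf A z z) ->
  2 * (y *m x^T) 0 0 - qf A y y <= qf (invmx A) x x.
Proof.
move=> hs hu hp.
set u := x *m invmx A.
have h := hp (u - y).
have hu1 : u *m A = x by rewrite /u mulmxKV.
have E : (u - y) *m A *m (u - y)^T =
   x *m invmx A *m x^T - x *m y^T - y *m x^T + y *m A *m y^T.
  rewrite linearB /= !mulmxBr !mulmxBl hu1.
  have -> : y *m A *m u^T = y *m x^T.
    by rewrite /u trmx_mul trmx_inv hs -mulmxA (mulmxA A) mulmxV // mul1mx.
  have -> : x *m u^T = x *m invmx A *m x^T by rewrite /u trmx_mul mulmxA trmx_inv hs.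
  set a := x *m invmx A *m x^T; set b := y *m x^T; set c := x *m y^T; set d := y *m A *m y^T.
  by apply/matrixP => i j; rewrite !mxE; lra.
have hxy : (x *m y^T) 0 0 = (y *m x^T) 0 0 by rewrite -tr11 trmx_mul trmxK.
move: h hxy; rewrite /qf E.
set a := x *m invmx A *m x^T; set b := y *m x^T; set c := x *m y^T; set d := y *m A *m y^T.
rewrite !mxE; lra.
Qed.

Lemma qf_comb (A B : 'M[R]_n) (t s : R) x y :
  qf (t *: A + s *: B) x y = t * qf A x y + s * qf B x y.
Proof.
by rewrite /qf mulmxDr mulmxDl -!scalemxAr -!scalemxAl !mxE.
Qed.

Lemma qf_addl (A : 'M[R]_n) x1 x2 y : qf A (x1 + x2) y = qf A x1 y + qf A x2 y.
Proof. by rewrite /qf !mulmxDl mxE. Qed.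
Lemma qf_addr (A : 'M[R]_n) x y1 y2 : qf A x (y1 + y2) = qf A x y1 + qf A x y2.
Proof. by rewrite /qf linearD /= mulmxDr mxE. Qed.
Lemma qf_scalel (A : 'M[R]_n) e x y : qf A (e *: x) y = e * qf A x y.
Proof. by rewrite /qf -!scalemxAl mxE. Qed.
Lemma qf_scaler (A : 'M[R]_n) e x y : qf A x (e *: y) = e * qf A x y.
Proof. by rewrite /qf linearZ /= -scalemxAr mxE. Qed.

Lemma qf_zero (A : 'M[R]_n) z : A^T = A -> A \in unitmx ->
  (forall z, 0 <= qf A z z) -> qf A z z = 0 -> z = 0.
Proof.
move=> hs hu hp hz.
have hw : forall w, qf A z w = 0.
  move=> w.
  set a := qf A z w; set b := qf A w w.
  have hb : 0 <= b by apply: hp.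
  have := hp (z + (- a / (b + 1)) *: w).
  rewrite qf_addl !qf_addr !qf_scalel !qf_scaler hz (qf_sym _ w z hs) -/a -/b.
  have hb1 : 0 < b + 1 by lra.
  move=> h.
  have e : 0 + - a / (b + 1) * a + (- a / (b + 1) * a + - a / (b + 1) * (- a / (b + 1) * b)) = - a ^+ 2 * (b + 2) / (b + 1) ^+ 2.
    by field; rewrite gt_eqF.
  rewrite e in h; have h2 := h.
  have h3 : 0 <= - a ^+ 2 * (b + 2).
    have := mulr_ge0 h2 (sqr_ge0 (b + 1)).
    by rewrite divfK // expf_neq0 // lt0r_neq0.
  nra.
have hzA : z *m A = 0.
  apply/rowP => j; rewrite [RHS]mxE.
  have := hw (delta_mx 0 j); rewrite /qf trmx_delta -colE => <-.
  by rewrite [RHS]mxE.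
by rewrite -(mulmxK hu z) hzA mul0mx.
Qed.

Lemma comb_unit (A B : 'M[R]_n) (t : R) : A^T = A -> B^T = B ->
  A \in unitmx -> B \in unitmx ->
  (forall z, 0 <= qf A z z) -> (forall z, 0 <= qf B z z) -> 0 <= t <= 1 ->
  t *: A + (1 - t) *: B \in unitmx.
Proof.
move=> sA sB uA uB pA pB /andP[t0 t1].
rewrite unitmxE unitfE; apply/negP => /det0P[v v0 hv].
have h0 : qf (t *: A + (1 - t) *: B) v v = 0 by rewrite /qf hv mul0mx mxE.
rewrite qf_comb in h0.
have a0 := pA v; have b0 := pB v.
have [tp|] := ltrP 0 t.
  have : qf A v v = 0 by nra.
  by move/(@qf_zero A v sA uA pA)=> e; rewrite e eqxx in v0.
move=> te; have tz : t = 0 by lra.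
have : qf B v v = 0 by rewrite tz in h0; lra.
by move/(@qf_zero B v sB uB pB)=> e; rewrite e eqxx in v0.
Qed.

Lemma tr_qf (M : 'M[R]_n) : \tr M = \sum_i qf M (delta_mx 0 i) (delta_mx 0 i).
Proof.
rewrite /mxtrace; apply: eq_bigr => i _.
by rewrite /qf trmx_delta -rowE -colE !mxE.
Qed.

Lemma trinv_convex (A B : 'M[R]_n) (t : R) : A^T = A -> B^T = B ->
  A \in unitmx -> B \in unitmx ->
  (forall z, 0 <= qf A z z) -> (forall z, 0 <= qf B z z) -> 0 <= t <= 1 ->
  \tr (invmx (t *: A + (1 - t) *: B)) <= t * \tr (invmx A) + (1 - t) * \tr (invmx B).
Proof.
move=> sA sB uA uB pA pB ht.
have uC := @comb_unit A B t sA sB uA uB pA pB ht.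
move: ht => /andP[t0 t1].
set C := t *: A + (1 - t) *: B.
rewrite !tr_qf !mulr_sumr -big_split /=; apply: ler_sum => i _.
set x := delta_mx 0 i : 'rV[R]_n.
set y := x *m invmx C.
have e1 : qf (invmx C) x x = (y *m x^T) 0 0 by [].
have e2 : qf C y y = (y *m x^T) 0 0.
  by rewrite /qf /y mulmxKV // -tr11 trmx_mul trmxK.
have kA := @qf_key A x y sA uA pA; have kB := @qf_key B x y sB uB pB.
have := qf_comb A B t (1 - t) y y; rewrite -/C e2 => e3.
rewrite e1.
nra.
Qed.
End Gen.
Arguments qf {R n}.

Section Spec.
Variables (R : rcfType) (n : nat).

Lemma pow_nonneg (P : 'M[R]_n) k : nonneg_mx P -> nonneg_mx (P ^+ k).
Proof.
move=> hP; elim: k => [|k IH] i j.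
  by rewrite expr0 mxE; case: (i == j).
rewrite exprS -mulmxE mxE; apply: sumr_ge0 => l _; exact: mulr_ge0.
Qed.

Lemma pow_stat (P : 'M[R]_n) (pi : 'cV[R]_n) k : pi^T *m P = pi^T -> pi^T *m P ^+ k = pi^T.
Proof.
move=> h; elim: k => [|k IH]; first by rewrite expr0 mulmx1.
by rewrite exprS -mulmxE mulmxA h.
Qed.

Lemma pi_pos (P : 'M[R]_n) (pi : 'cV[R]_n) : stochastic P -> irreducible P ->
  stationary_distribution P pi -> forall i, 0 < pi i 0.
Proof.
move=> [hP _] hirr [[hpi0 hsum] hst] i.
rewrite lt_def hpi0 andbT; apply/negP => /eqP hi.
suff : \sum_j pi j 0 = 0 by rewrite hsum => /eqP; rewrite oner_eq0.
apply: big1 => j _.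
have [k hk] := hirr j i.
have e := pow_stat P pi k hst.
have : (pi^T *m P ^+ k) 0 i = pi i 0 by rewrite e mxE.
rewrite mxE hi (bigD1 j) //= mxE => hs.
have r0 : 0 <= \sum_(l | l != j) pi^T 0 l * (P ^+ k) l i.
  apply: sumr_ge0 => l _; rewrite mxE; apply: mulr_ge0 => //; exact: (pow_nonneg P k hP).
have := hpi0 j; have := pow_nonneg P k hP j i.
nra.
Qed.

Definition hh (pi : 'cV[R]_n) (i : 'I_n) : R := Num.sqrt (pi i 0).

Lemma hh_pos (pi : 'cV[R]_n) : (forall i, 0 < pi i 0) -> forall i, 0 < hh pi i.
Proof. by move=> h i; rewrite /hh sqrtr_gt0. Qed.

Lemma hh_sq (pi : 'cV[R]_n) : (forall i, 0 < pi i 0) -> forall i, hh pi i ^+ 2 = pi i 0.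
Proof. by move=> h i; rewrite /hh sqr_sqrtr // ltW. Qed.

Lemma invDv (pi : 'cV[R]_n) : (forall i, 0 < pi i 0) ->
  invmx (Dv (sqrt_vec pi)) = diag_mx (\row_i (hh pi i)^-1).
Proof.
move=> hp.
have e : Dv (sqrt_vec pi) *m diag_mx (\row_i (hh pi i)^-1) = 1%:M.
  apply/matrixP => i j; rewrite /Dv mul_diag_mx !mxE.
  case: (eqVneq i j) => [->|ne]; last by rewrite mulr0n mulr0.
  rewrite !mulr1n -/(hh pi j) divff //; exact/lt0r_neq0/hh_pos.
have [u1 _] := mulmx1_unit e.
by rewrite -[RHS]mul1mx -(mulVmx u1) -mulmxA e mulmx1.
Qed.

Lemma Mmat_entry (pi : 'cV[R]_n) (X : 'M[R]_n) i j : (forall i, 0 < pi i 0) ->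
  Mmat pi X i j = (i == j)%:R - hh pi i * X i j / hh pi j + hh pi i * hh pi j.
Proof.
move=> hp; rewrite /Mmat invDv // /Dv mul_diag_mx mul_mx_diag !mxE big_ord1 !mxE.
by rewrite /hh.
Qed.

Lemma rev_entry (pi : 'cV[R]_n) (X : 'M[R]_n) : Dv pi *m X = X^T *m Dv pi ->
  forall i j, pi i 0 * X i j = pi j 0 * X j i.
Proof.
move=> h i j; have := congr1 (fun M : 'M[R]_n => M i j) h.
by rewrite /= /Dv mul_diag_mx mul_mx_diag !mxE => ->; rewrite mulrC.
Qed.

Lemma row_entry (X : 'M[R]_n) : X *m ones R n = ones R n -> forall i, \sum_j X i j = 1.
Proof.
move=> h i; have := congr1 (fun M : 'cV[R]_n => M i 0) h.
rewrite /= !mxE => <-; apply: eq_bigr => j _; by rewrite mxE mulr1.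
Qed.

Lemma Mmat_sym (pi : 'cV[R]_n) (X : 'M[R]_n) : (forall i, 0 < pi i 0) ->
  Dv pi *m X = X^T *m Dv pi -> (Mmat pi X)^T = Mmat pi X.
Proof.
move=> hp hr; apply/matrixP => i j; rewrite mxE !Mmat_entry // eq_sym.
have hi := hh_pos pi hp i; have hj := hh_pos pi hp j.
have e := rev_entry pi X hr i j; rewrite -!(hh_sq pi hp) in e.
have -> : hh pi j * X j i / hh pi i = hh pi i * X i j / hh pi j.
  apply: (@mulIf _ (hh pi i * hh pi j)); first by rewrite mulf_neq0 // lt0r_neq0.
  have ni : hh pi i != 0 by rewrite lt0r_neq0.
  have nj : hh pi j != 0 by rewrite lt0r_neq0.
  have -> : hh pi j * X j i / hh pi i * (hh pi i * hh pi j) = hh pi j ^+ 2 * X j i by field.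
  have -> : hh pi i * X i j / hh pi j * (hh pi i * hh pi j) = hh pi i ^+ 2 * X i j by field.
  by rewrite e.
by rewrite (mulrC (hh pi j)).
Qed.

Lemma sum_sym_le (a : 'I_n -> 'I_n -> R) (w : 'I_n -> R) :
  (forall i j, a i j = a j i) -> (forall i j, 0 <= a i j) ->
  \sum_i \sum_j a i j * w i * w j <= \sum_i \sum_j a i j * w i ^+ 2.
Proof.
move=> ha hn.
have e3 : \sum_i \sum_j a i j * w j ^+ 2 = \sum_i \sum_j a i j * w i ^+ 2.
  rewrite exchange_big; apply: eq_bigr => i _; apply: eq_bigr => j _ /=.
  by rewrite ha.
have h0 : 0 <= \sum_i \sum_j a i j * (w i - w j) ^+ 2.
  apply: sumr_ge0 => i _; apply: sumr_ge0 => j _; exact: mulr_ge0 (hn i j) (sqr_ge0 _).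
have e : \sum_i \sum_j a i j * (w i - w j) ^+ 2 =
   \sum_i \sum_j a i j * w i ^+ 2 - 2 * \sum_i \sum_j a i j * w i * w j
   + \sum_i \sum_j a i j * w j ^+ 2.
  rewrite mulr_sumr -sumrB -big_split; apply: eq_bigr => i _ /=.
  rewrite mulr_sumr -sumrB -big_split; apply: eq_bigr => j _ /=; ring.
move: h0; rewrite e e3; lra.
Qed.

Lemma Mmat_psd (pi : 'cV[R]_n) (X : 'M[R]_n) : (forall i, 0 < pi i 0) ->
  Dv pi *m X = X^T *m Dv pi -> X *m ones R n = ones R n -> nonneg_mx X ->
  forall z, 0 <= qf (Mmat pi X) z z.
Proof.
move=> hp hr hrow hnn v.
have hpos := hh_pos pi hp.
have E : qf (Mmat pi X) v v =
    \sum_i \sum_j v 0 i * (i == j)%:R * v 0 j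
  - \sum_i \sum_j (hh pi i ^+ 2 * X i j) * (v 0 i / hh pi i) * (v 0 j / hh pi j)
  + \sum_i \sum_j (v 0 i * hh pi i) * (v 0 j * hh pi j).
  rewrite qf_expand -sumrB -big_split; apply: eq_bigr => i _ /=.
  rewrite -sumrB -big_split; apply: eq_bigr => j _ /=; rewrite Mmat_entry //.
  have := hpos i; have := hpos j; move: (hh pi i) (hh pi j) => a b ha hb.
  by field; rewrite ?lt0r_neq0.
have E1 : \sum_i \sum_j v 0 i * (i == j)%:R * v 0 j = \sum_i v 0 i ^+ 2.
  apply: eq_bigr => i _; rewrite (bigD1 i) //= eqxx big1 ?addr0 => [|j hj].
    by rewrite mulr1 expr2.
  by rewrite eq_sym (negbTE hj) mulr0 mul0r.
have E2 : \sum_i \sum_j (v 0 i * hh pi i) * (v 0 j * hh pi j) =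
    (\sum_i v 0 i * hh pi i) ^+ 2.
  rewrite expr2 big_distrl; apply: eq_bigr => i _ /=; by rewrite big_distrr.
have E3 : \sum_i \sum_j (hh pi i ^+ 2 * X i j) * (v 0 i / hh pi i) ^+ 2 = \sum_i v 0 i ^+ 2.
  apply: eq_bigr => i _.
  transitivity (\sum_j X i j * v 0 i ^+ 2).
    apply: eq_bigr => j _; have := hpos i; move: (hh pi i) => a ha.
    by field; rewrite lt0r_neq0.
  by rewrite -big_distrl row_entry //; exact: mul1r.
rewrite E E1 E2.
have := sqr_ge0 (\sum_i v 0 i * hh pi i).
have : \sum_i \sum_j hh pi i ^+ 2 * X i j * (v 0 i / hh pi i) * (v 0 j / hh pi j)
   <= \sum_i v 0 i ^+ 2.
  rewrite -E3; apply: sum_sym_le.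
    by move=> i j; rewrite !hh_sq // rev_entry.
  by move=> i j; apply: mulr_ge0 => //; apply: sqr_ge0.
lra.
Qed.

Lemma Mmat_comb (pi : 'cV[R]_n) (X Y : 'M[R]_n) (t : R) : (forall i, 0 < pi i 0) ->
  Mmat pi (t *: X + (1 - t) *: Y) = t *: Mmat pi X + (1 - t) *: Mmat pi Y.
Proof.
move=> hp; apply/matrixP => i j; rewrite [RHS]mxE [X in _ = X + _]mxE [X in _ = _ + X]mxE !Mmat_entry // !mxE.
have := hh_pos pi hp j; move: (hh pi j) (hh pi i) => b a hb.
by field; rewrite lt0r_neq0.
Qed.

Lemma frob_convex (P X Y : 'M[R]_n) (t : R) : 0 <= t <= 1 ->
  frob2 (t *: X + (1 - t) *: Y - P) <= t * frob2 (X - P) + (1 - t) * frob2 (Y - P).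
Proof.
move=> /andP[t0 t1].
rewrite /frob2 !mulr_sumr -big_split; apply: ler_sum => i _ /=.
rewrite !mulr_sumr -big_split; apply: ler_sum => j _ /=.
rewrite !mxE; move: (X i j) (Y i j) (P i j) => x y p.
have e : t * (x - p) ^+ 2 + (1 - t) * (y - p) ^+ 2 - (t * x + (1 - t) * y - p) ^+ 2
  = t * (1 - t) * (x - y) ^+ 2 by ring.
have : 0 <= t * (1 - t) * (x - y) ^+ 2.
  by apply: mulr_ge0; [apply: mulr_ge0; lra | apply: sqr_ge0].
rewrite -e; lra.
Qed.
End Spec.


Theorem proposition2p5 (R : rcfType) (n : nat) (Pp Ss : rel 'I_n)
  (P : 'M[R]_n) (pi : 'cV[R]_n) :
  is_pattern Pp -> is_pattern Ss ->
  in_pattern Pp P -> reversible P -> stationary_distribution P pi ->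
  (* F is convex *)
  (forall (X Y : 'M[R]_n) (t : R),
     feasible Pp Ss P pi X -> feasible Pp Ss P pi Y -> 0 <= t <= 1 ->
     feasible Pp Ss P pi (t *: X + (1 - t) *: Y)) /\
  (* f is convex over F (f = +oo where the matrix is singular) *)
  (forall (X Y : 'M[R]_n) (t : R),
     feasible Pp Ss P pi X -> feasible Pp Ss P pi Y -> 0 <= t <= 1 ->
     Mmat pi X \in unitmx -> Mmat pi Y \in unitmx ->
     Mmat pi (t *: X + (1 - t) *: Y) \in unitmx /\
     fobj P pi (t *: X + (1 - t) *: Y)
       <= t * fobj P pi X + (1 - t) * fobj P pi Y).
Proof.
move=> hPp hSs hPin hrev hst.
have [hsto [hirr _]] := hrev.
have hp := @pi_pos _ _ P pi hsto hirr hst.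
split.
  move=> X Y t [a1 a2 a3 a4 a5] [b1 b2 b3 b4 b5] /andP[t0 t1]; split.
  - move=> i j hij; have [x1 x2] := a1 i j hij; have [y1 y2] := b1 i j hij.
    by rewrite !mxE x1 x2 y1 y2 !mulr0 addr0.
  - by move=> i j h1 h2; rewrite !mxE a2 // b2 //; ring.
  - by rewrite mulmxDl -!scalemxAl a3 b3 -scalerDl addrC subrK scale1r.
  - rewrite linearD /= !linearZ /= a4 b4 [in RHS]linearD /= [in RHS]linearZ /= [in RHS]linearZ /=. by rewrite mulmxDl -!scalemxAl.
  - move=> i j; rewrite !mxE; apply: addr_ge0; apply: mulr_ge0 => //; lra.
move=> X Y t [a1 a2 a3 a4 a5] [b1 b2 b3 b4 b5] ht uX uY.
have sX := @Mmat_sym _ _ pi X hp a4; have sY := @Mmat_sym _ _ pi Y hp b4.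
have pX := @Mmat_psd _ _ pi X hp a4 a3 a5; have pY := @Mmat_psd _ _ pi Y hp b4 b3 b5.
rewrite /fobj !Mmat_comb //; split; first exact: (@comb_unit _ _ _ _ t sX sY uX uY pX pY ht).
have h1 := @trinv_convex _ _ _ _ t sX sY uX uY pX pY ht.
have h2 := @frob_convex _ _ P X Y t ht.
move: ht => /andP[t0 t1].
nra.
Qed.
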